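(* Let $n\ge2$, $F(a)=\prod_{i=1}^n(a-a_i)$ with distinct real $a_i$, and consider the superintegrable systems (integrals of degree $2n+1$) of the construction below with $\nu_n=1$ and $a>0$: $\mathcal{I}_{++}$: $x(a)=\frac a2+\frac1{\sqrt{a-a_1}}+\sum_{i=2}^n\frac{\xi_i}{\sqrt{a-a_i}}$, so that with $u=\sqrt a$, $g=(\mu^2du^2+dy^2)/u^2$, $\mu=1-\frac1{(u^2-a_1)^{3/2}}-\sum_{i=2}^n\frac{\xi_i}{(u^2-a_i)^{3/2}}$; $\mathcal{I}_{+-}$: $x(a)=\frac a2-\frac1{\sqrt{a-a_1}}-\sum_{i=2}^n\frac{\xi_i}{\sqrt{a-a_i}}$, so that $\mu=1+\frac1{(u^2-a_1)^{3/2}}+\sum_{i=2}^n\frac{\xi_i}{(u^2-a_i)^{3/2}}$. These systems (generalizing the cubic cases $\mathcal{I}_{+\pm}$ with $F=a-a_1$) are globally defined on $M\cong\mathbb{H}^2$ under the restrictions $\mathcal{I}_{++}$: $-\infty<a_i<a_1<-1$ ($i\ge2$), $\xi_i>0$, and $\frac1{|a_1|^{3/2}}+\sum_{i=2}^n\frac{\xi_i}{|a_i|^{3/2}}<1$; $\mathcal{I}_{+-}$: $-\infty<a_i<a_1<0$ ($i\ge2$), $\xi_i>0$.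
   Context: Construction (odd degree $2n+1$): $F=\sum_kA_ka^k=\prod_i(a-a_i)$, signs $\epsilon_i$, $\Delta_i=\epsilon_i(a-a_i)$, $x=\frac{\nu_n}2a+\sum_i\xi'_i\Delta_i^{-1/2}$ (here all $\epsilon_i=1$ and the coefficients $\xi'_i$ are read off from the displayed $x$) on the domain of $a>0$ where all $\Delta_i>0$; $H=\Pi^2+aP_y^2$, $\Pi=\frac a{\dot x}P_a$ (geodesic Hamiltonian of $g=\dot x^2a^{-2}da^2+a^{-1}dy^2$, $y\in\mathbb{R}$); $G=\sum_{k=0}^nA_{n-k}H^{n-k}P_y^{2k+1}$, $Q_1=\sum_{k=0}^n\tilde b_kH^{n-k}\Pi P_y^{2k}$, $Q_2=\sum_{k=0}^n\tilde c_kH^{n-k}P_y^{2k+1}$, $S_1=Q_1+yG$, $S_2=Q_2+yQ_1+\frac{y^2}2G$, with $\tilde b_k=(-1)^k(\nu_n\sigma_k+\sum_i\frac{\xi'_i}{\sqrt{\Delta_i}}\sigma^i_{k-1})$, $\tilde c_k=\frac{(-1)^{k+1}}2\{\nu_n^2a\sigma_k+2\nu_n\sum_i\frac{\xi'_i}{\sqrt{\Delta_i}}(\sigma^i_k+a\sigma^i_{k-1})+\sum_i\frac{\xi_i'^2}{\Delta_i}\sigma^i_{k-1}+\sum_{i\neq j}\frac{\xi'_i\xi'_j}{\sqrt{\Delta_i\Delta_j}}(\sigma^{ij}_{k-1}+a\sigma^{ij}_{k-2})\}$; $\sigma_k$ by $\prod_i(a-a_i)=\sum_k(-1)^k\sigma_ka^{n-k}$,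 $\sigma^i_m$ by $\prod_{l\ne i}(a-a_l)=\sum_{m=0}^{n-1}(-1)^m\sigma^i_ma^{n-1-m}$, $\sigma^i_{-1}=\sigma^i_n=0$, $\sigma^{ij}_m$ by $\prod_{l\ne i,j}(a-a_l)=\sum_{m=0}^{n-2}(-1)^m\sigma^{ij}_ma^{n-2-m}$, $\sigma^{ij}_{-2}=\sigma^{ij}_{-1}=\sigma^{ij}_{n-1}=\sigma^{ij}_n=0$. ''Globally defined on $M\cong\mathbb{H}^2$'': $g$ is a smooth Riemannian metric on the whole domain $M=\{u>0\}\times\mathbb{R}$, there is a smooth diffeomorphism $t=t(u)$ of $(0,\infty)$ onto $(0,\infty)$ with $g=\Phi(dt^2+dy^2)/t^2$, $\Phi$ smooth positive, and $S_1,S_2$ are smooth on $T^*M$. *)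

(* Defs.v *)
From HB Require Import structures.
From mathcomp Require Import all_boot all_order all_algebra.
From mathcomp Require Import all_classical all_reals all_analysis.
Set Implicit Arguments. Unset Strict Implicit. Unset Printing Implicit Defensive.
Import Order.TTheory GRing.Theory Num.Theory.
Import numFieldNormedType.Exports.
Local Open Scope classical_set_scope.
Local Open Scope ring_scope.

Fixpoint iterD (R : realType) (V : normedModType R) (vs : seq V) (f : V -> R)
  : V -> R :=
  match vs with
  | [::] => f
  | v :: vs' => fun x => 'D_v (iterD vs' f) x
  end.

Definition smooth_on (R : realType) (V : normedModType R) (A : set V)
  (f : V -> R) : Prop :=
  forall vs : seq V,
    (forall (v x : V), A x -> derivable (iterD vs f) x v) /\
    {within A, continuous (iterD vs f)}.

Definition crd (R : realType) (m : nat) (v : 'rV[R]_m.+1) (k : nat) : R :=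
  v ord0 (inord k).

(* roots a_1..a_n are ar 0, ..., ar (n-1) *)
Definition Fpoly (R : realType) (n : nat) (ar : nat -> R) : {poly R} :=
  \prod_(l < n) ('X - (ar l)%:P).
Definition Fpoly_i (R : realType) (n : nat) (ar : nat -> R) (i : nat) : {poly R} :=
  \prod_(l < n | (l : nat) != i) ('X - (ar l)%:P).
Definition Fpoly_ij (R : realType) (n : nat) (ar : nat -> R) (i j : nat)
  : {poly R} :=
  \prod_(l < n | ((l : nat) != i) && ((l : nat) != j)) ('X - (ar l)%:P).

(* sigma_m defined by  p = sum_{m=0}^d (-1)^m sigma_m a^(d-m),
   and sigma_m = 0 for m outside [0,d] *)
Definition sigma_of (R : realType) (p : {poly R}) (d : nat) (m : int) : R :=
  if (0 <= m) && (m <= d%:Z) then (-1) ^+ `|m|%N * p`_(d - `|m|)%N else 0.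

Definition sig (R : realType) n ar (k : int) : R := sigma_of (Fpoly n ar) n k.
Definition sigi (R : realType) n ar (i : nat) (m : int) : R :=
  sigma_of (Fpoly_i n ar i) n.-1 m.
Definition sigij (R : realType) n ar (i j : nat) (m : int) : R :=
  sigma_of (Fpoly_ij n ar i j) n.-2 m.

Definition Acoef (R : realType) n (ar : nat -> R) (k : nat) : R := (Fpoly n ar)`_k.

(* all epsilon_i = 1 *)
Definition Delta (R : realType) (ar : nat -> R) (i : nat) (s : R) : R := s - ar i.

Definition xfun (R : realType) n (ar xi : nat -> R) (nu : R) (s : R) : R :=
  nu / 2 * s + \sum_(i < n) xi i / Num.sqrt (Delta ar i s).

Definition xdot (R : realType) n (ar xi : nat -> R) (nu : R) (s : R) : R :=
  derive1 (xfun n ar xi nu) s.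

Definition btil (R : realType) n (ar xi : nat -> R) (nu : R) (k : nat) (s : R) : R :=
  (-1) ^+ k * (nu * sig n ar k%:Z
    + \sum_(i < n) xi i / Num.sqrt (Delta ar i s) * sigi n ar i (k%:Z - 1)).

Definition ctil (R : realType) n (ar xi : nat -> R) (nu : R) (k : nat) (s : R) : R :=
  (-1) ^+ k.+1 / 2 *
   (nu ^+ 2 * s * sig n ar k%:Z
    + 2 * nu * \sum_(i < n) xi i / Num.sqrt (Delta ar i s)
                  * (sigi n ar i k%:Z + s * sigi n ar i (k%:Z - 1))
    + \sum_(i < n) xi i ^+ 2 / Delta ar i s * sigi n ar i (k%:Z - 1)
    + \sum_(i < n) \sum_(j < n | j != i)
        xi i * xi j / Num.sqrt (Delta ar i s * Delta ar j s)
          * (sigij n ar i j (k%:Z - 1) + s * sigij n ar i j (k%:Z - 2))).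

Definition PiA (R : realType) n (ar xi : nat -> R) nu (s Pa : R) : R :=
  s / xdot n ar xi nu s * Pa.
Definition HA (R : realType) n (ar xi : nat -> R) nu (s Pa Py : R) : R :=
  PiA n ar xi nu s Pa ^+ 2 + s * Py ^+ 2.
Definition GA (R : realType) n (ar xi : nat -> R) nu (s Pa Py : R) : R :=
  \sum_(k < n.+1) Acoef n ar (n - k) * HA n ar xi nu s Pa Py ^+ (n - k)
     * Py ^+ (2 * k + 1).
Definition Q1A (R : realType) n (ar xi : nat -> R) nu (s Pa Py : R) : R :=
  \sum_(k < n.+1) btil n ar xi nu k s * HA n ar xi nu s Pa Py ^+ (n - k)
     * PiA n ar xi nu s Pa * Py ^+ (2 * k).
Definition Q2A (R : realType) n (ar xi : nat -> R) nu (s Pa Py : R) : R :=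
  \sum_(k < n.+1) ctil n ar xi nu k s * HA n ar xi nu s Pa Py ^+ (n - k)
     * Py ^+ (2 * k + 1).
Definition S1A (R : realType) n (ar xi : nat -> R) nu (s y Pa Py : R) : R :=
  Q1A n ar xi nu s Pa Py + y * GA n ar xi nu s Pa Py.
Definition S2A (R : realType) n (ar xi : nat -> R) nu (s y Pa Py : R) : R :=
  Q2A n ar xi nu s Pa Py + y * Q1A n ar xi nu s Pa Py
  + y ^+ 2 / 2 * GA n ar xi nu s Pa Py.

(* ---------- the same objects in the coordinates (u, y) of M = {u>0} x R,
   a = u^2, hence P_a = P_u / (2u) on T*M ---------- *)
Definition S1u (R : realType) n (ar xi : nat -> R) nu (v : 'rV[R]_4) : R :=
  S1A n ar xi nu (crd v 0 ^+ 2) (crd v 1) (crd v 2 / (2 * crd v 0)) (crd v 3).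
Definition S2u (R : realType) n (ar xi : nat -> R) nu (v : 'rV[R]_4) : R :=
  S2A n ar xi nu (crd v 0 ^+ 2) (crd v 1) (crd v 2 / (2 * crd v 0)) (crd v 3).

(* g = xdot^2 a^(-2) da^2 + a^(-1) dy^2, pulled back by a = u^2 (da = 2u du):
   g = guu du^2 + gyy dy^2 *)
Definition guu (R : realType) n (ar xi : nat -> R) nu (u : R) : R :=
  xdot n ar xi nu (u ^+ 2) ^+ 2 / (u ^+ 2) ^+ 2 * (2 * u) ^+ 2.
Definition gyy (R : realType) (u : R) : R := (u ^+ 2)^-1.

Definition Mdom (R : realType) : set 'rV[R]_2 := [set v | 0 < crd v 0].
Definition TMdom (R : realType) : set 'rV[R]_4 := [set v | 0 < crd v 0].

Definition globally_defined (R : realType) n (ar xi : nat -> R) (nu : R) : Prop :=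
  [/\ [/\ smooth_on (@Mdom R) (fun v => guu n ar xi nu (crd v 0)),
          smooth_on (@Mdom R) (fun v => gyy (crd v 0)) &
          (forall u : R, 0 < u -> 0 < guu n ar xi nu u /\ 0 < gyy u)],
  (* a diffeomorphism t of (0,oo) onto (0,oo) with g = Phi (dt^2+dy^2)/t^2 *)
      (exists (t tinv : R -> R) (Phi : R -> R -> R),
         [/\ smooth_on [set u : R | 0 < u] t /\ smooth_on [set w : R | 0 < w] tinv,
             (forall u, 0 < u -> 0 < t u /\ tinv (t u) = u),
             (forall w, 0 < w -> 0 < tinv w /\ t (tinv w) = w),
             smooth_on (@Mdom R) (fun v => Phi (crd v 0) (crd v 1)) &
             (forall u y, 0 < u ->
                [/\ 0 < Phi u y,
                    guu n ar xi nu u = Phi u y * (derive1 t u) ^+ 2 / (t u) ^+ 2 &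
                    gyy u = Phi u y / (t u) ^+ 2])]),
      smooth_on (@TMdom R) (S1u n ar xi nu) &
      smooth_on (@TMdom R) (S2u n ar xi nu)].

(* xi' for the two systems: coefficient 1 (resp. -1) on a_1, xi_i (resp. -xi_i) *)
Definition xi_pp (R : realType) (xi : nat -> R) (i : nat) : R :=
  if i == 0%N then 1 else xi i.
Definition xi_pm (R : realType) (xi : nat -> R) (i : nat) : R := - xi_pp xi i.

(* Main.v *)
Require Import Defs.
From HB Require Import structures.
From mathcomp Require Import all_boot all_order all_algebra.
From mathcomp Require Import all_classical all_reals all_analysis.
From mathcomp Require Import ring lra.
Import Order.TTheory GRing.Theory Num.Theory.
Import numFieldNormedType.Exports.

Module Lib.
Set Implicit Arguments. Unset Strict Implicit. Unset Printing Implicit Defensive.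
Local Open Scope classical_set_scope.
Local Open Scope ring_scope.


Section Expr.
Variable R : realType.

Inductive expr := ECst of R | ELf of nat | EAdd of expr & expr | EMul of expr & expr
  | EInv of expr | ESqrt of expr.

Fixpoint denv (val : nat -> R) (e : expr) : R :=
  match e with
  | ECst c => c | ELf i => val i
  | EAdd a b => denv val a + denv val b
  | EMul a b => denv val a * denv val b
  | EInv a => (denv val a)^-1
  | ESqrt a => Num.sqrt (denv val a)
  end.

Fixpoint wfv (val : nat -> R) (e : expr) : Prop :=
  match e with
  | ECst _ | ELf _ => True
  | EAdd a b | EMul a b => wfv val a /\ wfv val b
  | EInv a => wfv val a /\ denv val a != 0
  | ESqrt a => wfv val a /\ 0 < denv val a
  end.

Fixpoint der (LD : nat -> expr) (e : expr) : expr :=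
  match e with
  | ECst _ => ECst 0
  | ELf i => LD i
  | EAdd a b => EAdd (der LD a) (der LD b)
  | EMul a b => EAdd (EMul (der LD a) b) (EMul a (der LD b))
  | EInv a => EMul (EMul (ECst (-1)) (der LD a)) (EMul (EInv a) (EInv a))
  | ESqrt a => EMul (der LD a) (EInv (EMul (ECst 2) (ESqrt a)))
  end.

Lemma wf_der val LD e : (forall i, wfv val (LD i)) -> wfv val e -> wfv val (der LD e).
Proof.
move=> hL; elim: e => //=.
- by move=> a iha b ihb [wa wb]; split; [apply: iha|apply: ihb].
- by move=> a iha b ihb [wa wb]; split; split => //; [apply: iha|apply: ihb].
- by move=> a iha [wa na]; split; split => //; apply: iha.
- move=> a iha [wa pa]; split; first exact: iha.
  split; [by split|]; rewrite mulf_neq0 // ?pnatr_eq0 //.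
  by rewrite gt_eqF // sqrtr_gt0.
Qed.

Section Core.
Variables (V : normedModType R) (L : nat -> V -> R) (LD : V -> nat -> expr) (x : V).
Hypothesis hL : forall i, differentiable (L i) x /\
  forall w, 'D_w (L i) x = denv (fun j => L j x) (LD w i).

Definition den e := fun y : V => denv (fun j => L j y) e.

Lemma core e : wfv (fun j => L j x) e -> differentiable (den e) x /\
  forall w, 'D_w (den e) x = denv (fun j => L j x) (der (LD w) e).
Proof.
elim: e => /=.
- move=> c _; split; first exact: differentiable_cst.
  by move=> w; rewrite /den /= derive_cst.
- by move=> i _; apply: hL.
- move=> a iha b ihb [wa wb].
  have [da Da] := iha wa; have [db Db] := ihb wb.
  have -> : den (EAdd a b) = den a + den b by [].
  split; first exact: differentiableD.
  move=> w; rewrite deriveD ?Da ?Db //; exact: diff_derivable.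
- move=> a iha b ihb [wa wb].
  have [da Da] := iha wa; have [db Db] := ihb wb.
  have -> : den (EMul a b) = den a * den b by [].
  split; first exact: differentiableM.
  move=> w; rewrite deriveM ?Da ?Db; try exact: diff_derivable.
  rewrite /den /= /GRing.scale /=. ring.
- move=> a iha [wa na].
  have [da Da] := iha wa.
  have -> : den (EInv a) = (fun y => (den a y)^-1) by [].
  split; first exact: differentiableV.
  move=> w; rewrite deriveV ?Da //; last exact: diff_derivable.
  rewrite /den /= /GRing.scale /= expr2 invfM; ring.
- move=> a iha [wa pa].
  have [da Da] := iha wa.
  have dsq : differentiable (@Num.sqrt R) (den a x).
    by apply/derivable1_diffP; have [] := is_derive1_sqrt pa.
  have -> : den (ESqrt a) = (@Num.sqrt R) \o den a by [].
  split; first exact: differentiable_comp.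
  move=> w; rewrite deriveE; last exact: differentiable_comp.
  rewrite diff_comp // /= -Da deriveE //.
  rewrite deriv1E /=; last by have [] := is_derive1_sqrt pa.
  rewrite derive1E derive_sqrt //.
Qed.
End Core.

Lemma smooth_expr (V : normedModType R) (A : set V) (L : nat -> V -> R)
  (LD : V -> nat -> expr) (e : expr) (f : V -> R) :
  (forall x, A x -> \forall y \near x, A y) ->
  (forall x, A x -> forall i, differentiable (L i) x /\
     forall w, 'D_w (L i) x = denv (fun j => L j x) (LD w i)) ->
  (forall x, A x -> forall w i, wfv (fun j => L j x) (LD w i)) ->
  (forall x, A x -> wfv (fun j => L j x) e) ->
  (forall x, A x -> f x = den L e x) ->
  smooth_on A f.
Proof.
move=> hA hL hLD we hf.
have key : forall vs, exists e', (forall x, A x -> wfv (fun j => L j x) e') /\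
    (forall x, A x -> Defs.iterD vs f x = den L e' x).
  elim=> [|v vs [e' [we' he']]]; first by exists e.
  exists (der (LD v) e'); split.
    by move=> x Ax; apply: wf_der; [exact: hLD|exact: we'].
  move=> x Ax /=.
  rewrite (@near_eq_derive _ _ _ _ (den L e')); last first.
    by apply: filterS (hA x Ax) => y Ay; apply: he'.
  by have [_ ->] := core (hL x Ax) (we' x Ax).
move=> vs; have [e' [we' he']] := key vs; split.
  move=> v x Ax; apply: (@near_eq_derivable _ _ _ (den L e')).
    by apply: filterS (hA x Ax) => y Ay; rewrite he'.
  by have [d _] := core (hL x Ax) (we' x Ax); exact: diff_derivable.
apply: continuous_in_subspaceT => x; rewrite inE => Ax.
have [d _] := core (hL x Ax) (we' x Ax).
have c := differentiable_continuous d.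
rewrite /continuous_at he' //.
apply: cvg_trans c; apply: near_eq_cvg.
by apply: filterS (hA x Ax) => y Ay; rewrite he'.
Qed.
End Expr.
Arguments ELf {R}.


Section More.
Variable R : realType.

Lemma denv_big (val : nat -> R) I (r : seq I) (P : pred I) (F : I -> expr R) :
  denv val (\big[@EAdd R/ECst 0]_(i <- r | P i) F i) = \sum_(i <- r | P i) denv val (F i).
Proof. by apply: (big_morph (denv val)). Qed.

Lemma der_big (LD : nat -> expr R) I (r : seq I) (P : pred I) (F : I -> expr R) :
  der LD (\big[@EAdd R/ECst 0]_(i <- r | P i) F i) = \big[@EAdd R/ECst 0]_(i <- r | P i) der LD (F i).
Proof. by apply: (big_morph (der LD)). Qed.

Lemma wfv_big (val : nat -> R) I (r : seq I) (P : pred I) (F : I -> expr R) :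
  (forall i, P i -> wfv val (F i)) -> wfv val (\big[@EAdd R/ECst 0]_(i <- r | P i) F i).
Proof. by move=> h; apply: (big_ind (wfv val)) => //= a b ha hb. Qed.

Fixpoint epow_def (e : expr R) (k : nat) : expr R :=
  match k with 0 => ECst 1 | k.+1 => EMul e (epow_def e k) end.
Fact epow_key : unit. Proof. by []. Qed.
Definition epow := locked_with epow_key epow_def.

Lemma denv_epow val e k : denv val (epow e k) = denv val e ^+ k.
Proof. by rewrite /epow unlock; elim: k => [|k ih] //=; rewrite ih exprS. Qed.

Lemma wfv_epow val e k : wfv val e -> wfv val (epow e k).
Proof. by move=> h; rewrite /epow unlock; elim: k => [|k ih] //=. Qed.

Lemma crd_leaf m (i : nat) (x w : 'rV[R]_m.+1) :
  differentiable (fun v : 'rV[R]_m.+1 => crd v i) x /\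
  'D_w (fun v : 'rV[R]_m.+1 => crd v i) x = crd w i.
Proof.
have dc : differentiable (fun v : 'rV[R]_m.+1 => crd v i) x.
  exact: differentiable_coord.
split => //.
have @f : {linear 'rV[R]_m.+1 -> R}.
  by exists (fun N : 'rV[R]_m.+1 => N ord0 (inord i)); do 2![eexists]; do ?[constructor];
     rewrite ?mxE// => ? *; rewrite ?mxE//; move=> ?; rewrite !mxE.
rewrite deriveE // (_ : (fun _ => _) = f) // diff_lin //.
exact: coord_continuous.
Qed.

Lemma id_leaf (x : R) : differentiable (fun v : R^o => v) x /\ forall w : R^o, 'D_w (fun v : R^o => v) x = w.
Proof. split; [by have [] := @is_diff_id R R^o x | move=> w; exact: derive_id]. Qed.

End More.


Section Conc.
Variables (R : realType) (n : nat) (ar c : nat -> R).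
Hypothesis ar_neg : forall i, (i < n)%N -> ar i < 0.

Definition eD i (s : expr R) := EAdd s (ECst (- ar i)).
Definition emu_def (s : expr R) := EAdd (ECst 1) (EMul (ECst (-1))
   (\big[@EAdd R/ECst 0]_(i < n) EMul (ECst (c i)) (EInv (EMul (ESqrt (eD i s)) (eD i s))))).

Fact emu_key : unit. Proof. by []. Qed.
Definition emu := locked_with emu_key emu_def.
Definition muf (s : R) := 1 - \sum_(i < n) c i / (Num.sqrt (s - ar i) * (s - ar i)).

Lemma pos_D (s : R) i : 0 <= s -> (i < n)%N -> 0 < s - ar i.
Proof. by move=> s0 /ar_neg ai; rewrite subr_gt0 (lt_le_trans ai). Qed.

Lemma denv_emu val s : denv val (emu s) = muf (denv val s).
Proof. by rewrite /emu unlock /emu_def /= denv_big mulN1r. Qed.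

Lemma wfv_emu val s : wfv val s -> 0 <= denv val s -> wfv val (emu s).
Proof.
move=> ws s0; rewrite /emu unlock; split => //; split => //; apply: wfv_big => i _ /=.
have hp := pos_D s0 (ltn_ord i).
split=> //; split; [split=> //; split=> //| ].
by rewrite mulf_neq0 // gt_eqF // sqrtr_gt0.
Qed.

Definition exfun := EAdd (EMul (ECst (1/2)) (ELf 0))
  (\big[@EAdd R/ECst 0]_(i < n) EMul (ECst (c i)) (EInv (ESqrt (eD i (ELf 0))))).

Lemma xfun_den : xfun n ar c 1 = fun s => denv (fun _ => s) exfun.
Proof. by apply: funext => s; rewrite /exfun /= denv_big. Qed.

Lemma xdot_val s : 0 <= s -> xdot n ar c 1 s = muf s / 2.
Proof.
move=> s0.
have wf : wfv (fun _ => s) exfun.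
  split=> //; apply: wfv_big => i _ /=.
  have hp := pos_D s0 (ltn_ord i).
  by split=> //; split; [split=> //|]; rewrite gt_eqF // sqrtr_gt0.
have [_ D] := @core R R^o (fun _ y => y) (fun w _ => ECst w) s
  (fun i => id_leaf s) exfun wf.
rewrite /xdot derive1E xfun_den.
have -> : (fun s0 : R => denv (fun=> s0) exfun) = den (fun _ y => y) exfun by [].
rewrite D /exfun /= der_big denv_big /muf.
rewrite (eq_bigr (fun i : 'I_n => - (c i / (Num.sqrt (s - ar i) * (s - ar i))) / 2)).
  by rewrite -big_distrl /= sumrN; ring.
move=> i _ /=.
have hp := pos_D s0 (ltn_ord i).
set q := Num.sqrt (s - ar i).
have qn : q != 0 by rewrite gt_eqF // sqrtr_gt0.
have hq : s - ar i = q ^+ 2 by rewrite /q sqr_sqrtr // ltW.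
rewrite hq; field; exact: qn.
Qed.
End Conc.



Lemma denvA (R : realType) val (a b : expr R) : denv val (EAdd a b) = denv val a + denv val b. Proof. by []. Qed.
Lemma denvM (R : realType) val (a b : expr R) : denv val (EMul a b) = denv val a * denv val b. Proof. by []. Qed.
Lemma denvI (R : realType) val (a : expr R) : denv val (EInv a) = (denv val a)^-1. Proof. by []. Qed.
Lemma denvC (R : realType) val (r : R) : denv val (ECst r) = r. Proof. by []. Qed.

Section Big.
Variables (R : realType) (n : nat) (ar c : nat -> R).
Hypothesis ar_neg : forall i, (i < n)%N -> ar i < 0.
Hypothesis mu_pos : forall s, 0 <= s -> 0 < muf n ar c s.

Notation eD := (eD ar).
Definition eXD (s : expr R) := EMul (emu n ar c s) (ECst (2^-1)).
Definition ePi s Pa := EMul (EMul s (EInv (eXD s))) Pa.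
Definition eH s Pa Py := EAdd (epow (ePi s Pa) 2) (EMul s (epow Py 2)).
Definition eG s Pa Py := \big[@EAdd R/ECst 0]_(k < n.+1)
  EMul (EMul (ECst (Acoef n ar (n - k))) (epow (eH s Pa Py) (n - k))) (epow Py (2 * k + 1)).
Definition eB (k : nat) s := EMul (ECst ((-1) ^+ k)) (EAdd (ECst (1 * sig n ar k%:Z))
  (\big[@EAdd R/ECst 0]_(i < n) EMul (EMul (ECst (c i)) (EInv (ESqrt (eD i s))))
      (ECst (sigi n ar i (k%:Z - 1))))).
Definition eQ1 s Pa Py := \big[@EAdd R/ECst 0]_(k < n.+1)
  EMul (EMul (EMul (eB k s) (epow (eH s Pa Py) (n - k))) (ePi s Pa)) (epow Py (2 * k)).
Definition eDD (k : nat) s := \big[@EAdd R/ECst 0]_(i < n) \big[@EAdd R/ECst 0]_(j < n | j != i)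
  EMul (EMul (ECst (c i * c j)) (EInv (ESqrt (EMul (eD i s) (eD j s)))))
     (EAdd (ECst (sigij n ar i j (k%:Z - 1))) (EMul s (ECst (sigij n ar i j (k%:Z - 2))))).
Definition eC (k : nat) s := EMul (ECst ((-1) ^+ k.+1 / 2)) (EAdd (EAdd (EAdd
   (EMul (EMul (ECst (1 ^+ 2)) s) (ECst (sig n ar k%:Z)))
   (EMul (ECst (2 * 1)) (\big[@EAdd R/ECst 0]_(i < n) EMul (EMul (ECst (c i)) (EInv (ESqrt (eD i s))))
        (EAdd (ECst (sigi n ar i k%:Z)) (EMul s (ECst (sigi n ar i (k%:Z - 1))))))))
   (\big[@EAdd R/ECst 0]_(i < n) EMul (EMul (ECst (c i ^+ 2)) (EInv (eD i s))) (ECst (sigi n ar i (k%:Z - 1)))))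
   (eDD k s)).
Definition eQ2 s Pa Py := \big[@EAdd R/ECst 0]_(k < n.+1)
  EMul (EMul (eC k s) (epow (eH s Pa Py) (n - k))) (epow Py (2 * k + 1)).
Definition eS1 s y Pa Py := EAdd (eQ1 s Pa Py) (EMul y (eG s Pa Py)).
Definition eS2 s y Pa Py := EAdd (EAdd (eQ2 s Pa Py) (EMul y (eQ1 s Pa Py)))
  (EMul (EMul (epow y 2) (EInv (ECst 2))) (eG s Pa Py)).

Section Den.
Variables (val : nat -> R) (s y Pa Py : expr R).
Hypothesis s0 : 0 <= denv val s.

Lemma den_Pi : denv val (ePi s Pa) = PiA n ar c 1 (denv val s) (denv val Pa).
Proof. by rewrite /ePi /PiA !denvM denvI /eXD denvM denv_emu denvC xdot_val. Qed.

Lemma den_H : denv val (eH s Pa Py) = HA n ar c 1 (denv val s) (denv val Pa) (denv val Py).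
Proof. by rewrite /eH /HA denvA denvM !denv_epow den_Pi. Qed.

Lemma den_G : denv val (eG s Pa Py) = GA n ar c 1 (denv val s) (denv val Pa) (denv val Py).
Proof.
rewrite /eG /GA denv_big; apply: eq_bigr => k _.
by rewrite !denvM denvC !denv_epow den_H.
Qed.

Lemma den_B k : denv val (eB k s) = btil n ar c 1 k (denv val s).
Proof. by rewrite /eB /btil /= denv_big. Qed.

Lemma den_Q1 : denv val (eQ1 s Pa Py) = Q1A n ar c 1 (denv val s) (denv val Pa) (denv val Py).
Proof.
rewrite /eQ1 /Q1A denv_big; apply: eq_bigr => k _.
transitivity (denv val (eB k s) * denv val (epow (eH s Pa Py) (n - k)) *
  denv val (ePi s Pa) * denv val (epow Py (2 * k))); first by [].
by rewrite den_B !denv_epow den_H den_Pi.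
Qed.

Lemma den_C k : denv val (eC k s) = ctil n ar c 1 k (denv val s).
Proof.
rewrite /eC /ctil /eDD /= !denv_big; congr (_ * (_ + _ + _ + _)).
by apply: eq_bigr => i _; rewrite denv_big.
Qed.

Lemma den_Q2 : denv val (eQ2 s Pa Py) = Q2A n ar c 1 (denv val s) (denv val Pa) (denv val Py).
Proof.
rewrite /eQ2 /Q2A denv_big; apply: eq_bigr => k _.
transitivity (denv val (eC k s) * denv val (epow (eH s Pa Py) (n - k)) *
  denv val (epow Py (2 * k + 1))); first by [].
by rewrite den_C !denv_epow den_H.
Qed.

Lemma den_S1 : denv val (eS1 s y Pa Py) =
  S1A n ar c 1 (denv val s) (denv val y) (denv val Pa) (denv val Py).
Proof. by rewrite /eS1 /S1A denvA denvM den_Q1 den_G. Qed.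

Lemma den_S2 : denv val (eS2 s y Pa Py) =
  S2A n ar c 1 (denv val s) (denv val y) (denv val Pa) (denv val Py).
Proof. by rewrite /eS2 /S2A !denvA !denvM denvI denvC den_Q1 den_G den_Q2 denv_epow. Qed.

Hypothesis ws : wfv val s.
Hypothesis wy : wfv val y.
Hypothesis wPa : wfv val Pa.
Hypothesis wPy : wfv val Py.

Lemma wD i : (i < n)%N -> wfv val (eD i s) /\ 0 < denv val (eD i s).
Proof. by move=> lin; split; [split|exact: (pos_D ar_neg s0 lin)]. Qed.

Lemma wf_Pi : wfv val (ePi s Pa).
Proof.
split=> //; split=> //; split; first by split=> //; apply: wfv_emu.
rewrite /= denv_emu mulf_neq0 ?invr_eq0 ?pnatr_eq0 //.
by rewrite gt_eqF // mu_pos.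
Qed.

Lemma wf_H : wfv val (eH s Pa Py).
Proof. by split; [apply: wfv_epow; apply: wf_Pi|split=> //; apply: wfv_epow]. Qed.

Lemma wf_sqD i : (i < n)%N -> wfv val (EInv (ESqrt (eD i s))).
Proof.
move=> lin; have [w p] := wD lin.
by split; [split|rewrite /= gt_eqF // sqrtr_gt0].
Qed.

Lemma wf_G : wfv val (eG s Pa Py).
Proof.
apply: wfv_big => k _; split; [split=> //; apply: wfv_epow; apply: wf_H|].
exact: wfv_epow.
Qed.

Lemma wf_B k : wfv val (eB k s).
Proof.
split=> //; split=> //; apply: wfv_big => i _; split=> //; split=> //.
exact: wf_sqD.
Qed.

Lemma wf_Q1 : wfv val (eQ1 s Pa Py).
Proof.
apply: wfv_big => k _; split; last exact: wfv_epow.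
split; last exact: wf_Pi.
split; [exact: wf_B|apply: wfv_epow; exact: wf_H].
Qed.

Lemma wf_C k : wfv val (eC k s).
Proof.
split=> //; split; [split; [split|]|].
- by split.
- split=> //; apply: wfv_big => i _; split; [split=> //; exact: wf_sqD|by split].
- apply: wfv_big => i _; split=> //; split=> //.
  have [w p] := wD (ltn_ord i); by split=> //; rewrite gt_eqF.
- apply: wfv_big => i _; apply: wfv_big => j _; split; last by split.
  split=> //.
  have [w p] := wD (ltn_ord i); have [w' p'] := wD (ltn_ord j).
  have pp : 0 < denv val (EMul (eD i s) (eD j s)) by rewrite /= mulr_gt0.
  by split; [split|rewrite /= gt_eqF // sqrtr_gt0].
Qed.

Lemma wf_Q2 : wfv val (eQ2 s Pa Py).
Proof.
apply: wfv_big => k _; split; last exact: wfv_epow.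
split; [exact: wf_C|apply: wfv_epow; exact: wf_H].
Qed.

Lemma wf_S1 : wfv val (eS1 s y Pa Py).
Proof. by split; [exact: wf_Q1|split=> //; exact: wf_G]. Qed.

Lemma wf_S2 : wfv val (eS2 s y Pa Py).
Proof.
split; [split; [exact: wf_Q2|split=> //; exact: wf_Q1]|].
split; [split; [exact: wfv_epow|split=> //; rewrite /= pnatr_eq0 //]|exact: wf_G].
Qed.
End Den.
End Big.


Section T.
Variables (R : realType) (n : nat) (ar c : nat -> R) (m : R).
Hypothesis ar_neg : forall i, (i < n)%N -> ar i < 0.
Hypothesis m_pos : 0 < m.
Hypothesis mu_lb : forall s, 0 <= s -> m <= muf n ar c s.

Definition Et : expr R := EAdd (ELf 0) (EMul (ECst (-1))
  (\big[@EAdd R/ECst 0]_(i < n) EMul (ECst (c i / - ar i))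
     (EMul (ELf 0) (EInv (ESqrt (eD ar i (EMul (ELf 0) (ELf 0)))))))).
Definition tf (u : R) := denv (fun _ => u) Et.

Lemma sq_ge0 (u : R) : 0 <= u * u.
Proof. by rewrite -expr2 sqr_ge0. Qed.

Lemma wf_Et val : wfv val Et.
Proof.
split=> //; split=> //; apply: wfv_big => i _; split=> //; split=> //.
have hp := pos_D ar_neg (sq_ge0 (val 0%N)) (ltn_ord i).
by split; [split|rewrite /= gt_eqF // sqrtr_gt0].
Qed.

Lemma tf_der (u : R) : differentiable tf u /\ 'D_1 tf u = muf n ar c (u * u).
Proof.
have [d D] := @core R R^o (fun _ y => y) (fun w _ => ECst w) u
  (fun i => id_leaf u) Et (wf_Et _).
split; first exact: d.
rewrite [LHS]D /Et /= der_big !denv_big /muf.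
rewrite [X in -1 * X](eq_bigr (fun i : 'I_n => c i / (Num.sqrt (u * u - ar i) * (u * u - ar i)))).
  by ring.
move=> i _ /=.
have hp := pos_D ar_neg (sq_ge0 u) (ltn_ord i).
set q := Num.sqrt (u * u - ar i).
have qn : q != 0 by rewrite gt_eqF // sqrtr_gt0.
have hq : u * u - ar i = q ^+ 2 by rewrite /q sqr_sqrtr // ltW.
have an : ar i != 0 by rewrite lt_eqF // ar_neg.
apply: (@eq_trans _ _ (c i / - ar i * (q ^+ 2 - u * u) / q ^+ 3)).
  by field; rewrite qn an.
have -> : q ^+ 2 - u * u = - ar i by rewrite -hq; ring.
rewrite hq; field; rewrite ?qn ?an ?oppr_eq0 //=.
Qed.

Lemma tf0 : tf 0 = 0.
Proof.
rewrite /tf /Et /= denv_big big1 ?mulr0 ?addr0 // => i _ /=.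
by rewrite !mul0r mulr0.
Qed.

Lemma tf_cont : continuous tf.
Proof. by move=> u; have [d _] := tf_der u; exact: differentiable_continuous. Qed.

Lemma tf_dpos (u : R) : m <= 'D_1 tf u.
Proof. by have [_ ->] := tf_der u; apply: mu_lb; apply: sq_ge0. Qed.

Lemma tf_incr x y : x < y -> tf x < tf y.
Proof.
move=> xy; apply: (@gtr0_derive1_incr _ tf x y) => //.
- by move=> z _; have [d _] := tf_der z; exact: diff_derivable.
- by move=> z _; rewrite derive1E (lt_le_trans m_pos) // tf_dpos.
- by apply: continuous_subspaceT; exact: tf_cont.
Qed.

Lemma tf_inj x y : tf x = tf y -> x = y.
Proof.
move=> e; case: (ltgtP x y) => // h.
- by have := tf_incr h; rewrite e ltxx.
- by have := tf_incr h; rewrite e ltxx.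
Qed.

Lemma tf_lb u : 0 <= u -> m * u <= tf u.
Proof.
rewrite le_eqVlt => /orP[/eqP <-|u0]; first by rewrite tf0 mulr0.
have [z _ hz] := @MVT R tf (fun z => muf n ar c (z * z)) 0 u u0
  (fun z _ => let: conj d D := tf_der z in
     DeriveDef (diff_derivable d) D)
  (ltac:(by apply: continuous_subspaceT; exact: tf_cont)).
move: hz; rewrite tf0 subr0 subr0 => ->.
by rewrite ler_pM2r // mu_lb // sq_ge0.
Qed.

Lemma tf_pos u : 0 < u -> 0 < tf u.
Proof. by move=> u0; rewrite (lt_le_trans _ (tf_lb (ltW u0))) // mulr_gt0. Qed.

Lemma tf_surj w : 0 < w -> exists u, 0 < u /\ tf u = w.
Proof.
move=> w0.
have h0 : 0 <= w / m by rewrite divr_ge0 // ltW.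
have hl : w <= tf (w / m).
  by rewrite (le_trans _ (tf_lb h0)) // mulrC divfK // gt_eqF.
have [z zin hz] : exists2 z, z \in `[0, w / m] & tf z = w.
  apply: IVT => //; first by apply: continuous_subspaceT; exact: tf_cont.
  have t0 : 0 <= tf (w / m) by rewrite (le_trans _ hl) // ltW.
  by rewrite tf0 (min_idPl t0) (max_idPr t0) hl ltW.
exists z; split => //.
move: zin; rewrite in_itv /= => /andP[z0 _].
rewrite lt_neqAle z0 andbT; apply/negP => /eqP ez.
by move: hz; rewrite -ez tf0 => wz; move: w0; rewrite -wz ltxx.
Qed.

Definition tinv (w : R) := xget 0 [set u | 0 < u /\ tf u = w].

Lemma tinvP w : 0 < w -> 0 < tinv w /\ tf (tinv w) = w.
Proof. by move=> w0; apply: (xgetPex 0 (tf_surj w0)). Qed.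

Lemma tinvK u : 0 < u -> tinv (tf u) = u.
Proof. by move=> u0; have [_ /tf_inj] := tinvP (tf_pos u0). Qed.

End T.


Section Final.
Variables (R : realType) (n : nat) (ar c : nat -> R) (m : R).
Hypothesis ar_neg : forall i, (i < n)%N -> ar i < 0.
Hypothesis m_pos : 0 < m.
Hypothesis mu_lb : forall s, 0 <= s -> m <= muf n ar c s.

Lemma mu_pos s : 0 <= s -> 0 < muf n ar c s.
Proof. by move=> s0; rewrite (lt_le_trans m_pos) // mu_lb. Qed.

Notation tf := (tf n ar c).
Notation tinv := (tinv n ar c).

Lemma near_pos (x : R) : 0 < x -> \forall y \near x, 0 < y.
Proof. move=> x0; first [exact: (cvgr_gt (f := id) cvg_id x0) | apply: open_nbhs_nbhs; split; [exact: open_gt|exact: x0]]. Qed.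

Lemma tinv_leaf (w : R) : 0 < w -> differentiable (tinv : R^o -> R^o) w /\
  forall v : R^o, 'D_v (tinv : R^o -> R^o) w = v * (muf n ar c (tinv w * tinv w))^-1.
Proof.
move=> w0.
have [x0 tx] := tinvP ar_neg m_pos mu_lb w0.
set x := tinv w in x0 tx *.
have hd : is_derive x 1 tf (muf n ar c (x * x)).
  have [d D] := tf_der c ar_neg x; exact: (DeriveDef (diff_derivable d) D).
have mn : muf n ar c (x * x) != 0 by rewrite gt_eqF // mu_pos // sq_ge0.
have hi : is_derive (tf x) 1 tinv (muf n ar c (x * x))^-1.
  apply: is_derive_inverse => //.
  - apply: filterS (near_pos x0) => y y0; exact: (tinvK ar_neg m_pos mu_lb y0).
  - apply: filterE => y; have [d _] := tf_der c ar_neg y; exact: differentiable_continuous d.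
rewrite tx in hi; have [dv Dv] := hi.
have dt : differentiable (tinv : R^o -> R^o) w by apply/derivable1_diffP.
split => // v.
rewrite deriveE // deriv1E // derive1E Dv.
by rewrite /GRing.scale /=.
Qed.


Lemma near_crd0 k (x : 'rV[R]_k.+1) : 0 < crd x 0 -> \forall y \near x, 0 < crd y 0.
Proof.
move=> x0; have [d _] := crd_leaf 0 x x.
exact: (differentiable_continuous d) _ (near_pos x0).
Qed.

Lemma crd_hL k (x : 'rV[R]_k.+1) (i : nat) :
  differentiable (fun v : 'rV[R]_k.+1 => crd v i) x /\ forall w, 'D_w (fun v : 'rV[R]_k.+1 => crd v i) x = denv (fun j => crd x j) (ECst (crd w i)).
Proof. by split; [have [] := crd_leaf i x x| move=> w; have [] := crd_leaf i x w]. Qed.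

Lemma crd0_hL k (x : 'rV[R]_k.+1) (i : nat) :
  differentiable (fun v : 'rV[R]_k.+1 => crd v 0) x /\ forall w, 'D_w (fun v : 'rV[R]_k.+1 => crd v 0) x = denv (fun j => crd x 0) (ECst (crd w 0)).
Proof. by split; [have [] := crd_leaf 0 x x| move=> w; have [] := crd_leaf 0 x w]. Qed.

Definition eguu : expr R := EMul (EMul (epow (eXD n ar c (epow (ELf 0) 2)) 2)
  (EInv (epow (epow (ELf 0) 2) 2))) (epow (EMul (ECst 2) (ELf 0)) 2).

Lemma guu_pos (u : R) : 0 < u -> 0 < guu n ar c 1 u.
Proof.
move=> u0; rewrite /guu xdot_val ?sqr_ge0 //.
by rewrite mulr_gt0 ?divr_gt0 ?exprn_gt0 ?mulr_gt0 ?mu_pos ?sqr_ge0.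
Qed.

Lemma gd : globally_defined n ar c 1.
Proof.
split.
- split.
  + apply: (@smooth_expr R _ _ (fun _ v => crd v 0) (fun w _ => ECst (crd w 0)) eguu).
    * by move=> x x0; exact: near_crd0.
    * by move=> x _ i; exact: crd0_hL.
    * by [].
    * move=> x x0; rewrite /eguu.
      have p2 : 0 <= crd x 0 ^+ 2 by rewrite sqr_ge0.
      split; [split|].
      - apply: wfv_epow; split=> //; apply: wfv_emu => //; first exact: wfv_epow.
        by rewrite denv_epow.
      - split; first by apply: wfv_epow; apply: wfv_epow.
        by rewrite !denv_epow expf_neq0 // expf_neq0 // gt_eqF.
      - exact: wfv_epow.
    * move=> x x0; rewrite /den /eguu !denvM denvI !denv_epow /eXD denvM denv_emu denvC.
      by rewrite denv_epow /guu xdot_val // sqr_ge0.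
  + apply: (@smooth_expr R _ _ (fun _ v => crd v 0) (fun w _ => ECst (crd w 0))
      (EInv (epow (ELf 0) 2))).
    * by move=> x x0; exact: near_crd0.
    * by move=> x _ i; exact: crd0_hL.
    * by [].
    * move=> x x0; split; first exact: wfv_epow.
      by rewrite denv_epow expf_neq0 // gt_eqF.
    * by move=> x x0; rewrite /den denvI denv_epow.
  + move=> u u0; split; first exact: guu_pos.
    by rewrite /gyy invr_gt0 exprn_gt0.
- exists tf, tinv, (fun u (_ : R) => tf u ^+ 2 / u ^+ 2); split.
  + split.
    * apply: (@smooth_expr R R^o _ (fun _ y => y) (fun w _ => ECst w) (Et n ar c)).
      - by move=> x x0; exact: near_pos.
      - by move=> x _ i; exact: id_leaf.
      - by [].
      - by move=> x _; exact: wf_Et.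
      - by [].
    * apply: (@smooth_expr R R^o _ (fun _ y => tinv y)
        (fun w _ => EMul (ECst w) (EInv (emu n ar c (EMul (ELf 0) (ELf 0))))) (ELf 0)).
      - by move=> x x0; exact: near_pos.
      - move=> x x0 i; have [d D] := tinv_leaf x0; split => // w.
        by rewrite D denvM denvI denv_emu.
      - move=> x x0 w i; split => //; split.
          by apply: wfv_emu => //; rewrite /= sq_ge0.
        by rewrite denv_emu gt_eqF // mu_pos // sq_ge0.
      - by [].
      - by [].
  + move=> u u0; split; first exact: (tf_pos ar_neg m_pos mu_lb u0).
    exact: (tinvK ar_neg m_pos mu_lb u0).
  + by move=> w w0; exact: (tinvP ar_neg m_pos mu_lb w0).
  + apply: (@smooth_expr R _ _ (fun _ v => crd v 0) (fun w _ => ECst (crd w 0))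
      (EMul (epow (Et n ar c) 2) (EInv (epow (ELf 0) 2)))).
    * by move=> x x0; exact: near_crd0.
    * by move=> x _ i; exact: crd0_hL.
    * by [].
    * move=> x x0; split; first by apply: wfv_epow; exact: wf_Et.
      split; first exact: wfv_epow.
      by rewrite denv_epow expf_neq0 // gt_eqF.
    * by move=> x x0; rewrite /den denvM denvI !denv_epow.
  + move=> u y u0.
    have t0 := tf_pos ar_neg m_pos mu_lb u0.
    have [_ D] := tf_der c ar_neg u.
    have un : u != 0 by rewrite gt_eqF.
    have tn : tf u != 0 by rewrite gt_eqF.
    split.
    * by rewrite divr_gt0 // exprn_gt0.
    * rewrite derive1E D /guu xdot_val ?sqr_ge0 // -expr2.
      by field; rewrite un tn.
    * by rewrite /gyy; field; rewrite un tn.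
- apply: (@smooth_expr R _ _ (fun j v => crd v j) (fun w j => ECst (crd w j))
    (eS1 n ar c (epow (ELf 0) 2) (ELf 1) (EMul (ELf 2) (EInv (EMul (ECst 2) (ELf 0)))) (ELf 3))).
  + by move=> x x0; exact: near_crd0.
  + by move=> x _ i; exact: crd_hL.
  + by [].
  + move=> x x0; apply: (wf_S1 ar_neg mu_pos) => //.
    * by rewrite denv_epow sqr_ge0.
    * exact: wfv_epow.
    * split=> //; split=> //; rewrite /= mulf_neq0 // ?gt_eqF //.
  + move=> x x0; rewrite /den den_S1 ?denv_epow ?sqr_ge0 //.
- apply: (@smooth_expr R _ _ (fun j v => crd v j) (fun w j => ECst (crd w j))
    (eS2 n ar c (epow (ELf 0) 2) (ELf 1) (EMul (ELf 2) (EInv (EMul (ECst 2) (ELf 0)))) (ELf 3))).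
  + by move=> x x0; exact: near_crd0.
  + by move=> x _ i; exact: crd_hL.
  + by [].
  + move=> x x0; apply: (wf_S2 ar_neg mu_pos) => //.
    * by rewrite denv_epow sqr_ge0.
    * exact: wfv_epow.
    * split=> //; split=> //; rewrite /= mulf_neq0 // ?gt_eqF //.
  + move=> x x0; rewrite /den den_S2 ?denv_epow ?sqr_ge0 //.
Qed.


End Final.


Lemma pow32 (R : realType) (a : R) : 0 < a -> a `^ (3 / 2) = a * Num.sqrt a.
Proof.
move=> a0.
have -> : (3 / 2 : R) = 1 + 2^-1 by field.
rewrite powRD; last by rewrite gt_eqF ?implybT.
by rewrite powRr1 ?ltW // powR12_sqrt // ltW.
Qed.

Lemma term_le (R : realType) (cc a s : R) : 0 <= cc -> a < 0 -> 0 <= s ->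
  cc / (Num.sqrt (s - a) * (s - a)) <= cc / (`|a| `^ (3 / 2)).
Proof.
move=> c0 a0 s0.
have na : 0 < - a by rewrite oppr_gt0.
rewrite ltr0_norm // pow32 //.
apply: ler_wpM2l => //.
have p1 : 0 < - a * Num.sqrt (- a) by rewrite mulr_gt0 // sqrtr_gt0.
have hsa : - a <= s - a by lra.
rewrite lef_pV2 ?posrE //; last first.
  have hp : 0 < s - a by lra.
  by rewrite mulr_gt0 // sqrtr_gt0.
have hp : 0 < s - a by lra.
rewrite mulrC; apply: ler_pM.
- exact: sqrtr_ge0.
- exact: ltW.
- by rewrite ler_sqrt ?(ltW hp) //; lra.
- lra.
Qed.


End Lib.
Import Lib.
Unset Implicit Arguments. Set Strict Implicit. Set Printing Implicit Defensive.
Local Open Scope ring_scope.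


Theorem proposition28 (R : realType) (n : nat) (ar xi : nat -> R) :
  (2 <= n)%N ->
  (forall i j, (i < n)%N -> (j < n)%N -> ar i = ar j -> i = j) ->
  ( (* I_{++} *)
    ((forall i, (1 <= i < n)%N -> ar i < ar 0%N) ->
     ar 0%N < -1 ->
     (forall i, (1 <= i < n)%N -> 0 < xi i) ->
     1 / (`|ar 0%N| `^ (3 / 2)) + \sum_(1 <= i < n) xi i / (`|ar i| `^ (3 / 2)) < 1 ->
     globally_defined n ar (xi_pp xi) 1)
  /\
    (* I_{+-} *)
    ((forall i, (1 <= i < n)%N -> ar i < ar 0%N) ->
     ar 0%N < 0 ->
     (forall i, (1 <= i < n)%N -> 0 < xi i) ->
     globally_defined n ar (xi_pm xi) 1) ).
Proof.
move=> n2 _.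
have arneg : forall r, (forall i, (1 <= i < n)%N -> ar i < ar 0%N) -> ar 0%N < r -> r <= 0 ->
    forall i, (i < n)%N -> ar i < 0.
  move=> r hi h0 r0 [|i] lin; first exact: (lt_le_trans h0).
  by rewrite (lt_trans (hi i.+1 _)) // (lt_le_trans h0).
have cpos : forall i, (forall i, (1 <= i < n)%N -> 0 < xi i) -> (i < n)%N -> 0 < xi_pp xi i.
  move=> [|i] hx lin; first by rewrite /xi_pp eqxx.
  by rewrite /xi_pp /= hx.
split.
- move=> hi h0 hx hK.
  have an := arneg (-1) hi h0 (lerN10 _).
  pose K := \sum_(i < n) xi_pp xi i / (`|ar i| `^ (3 / 2)).
  have KE : K = 1 / (`|ar 0%N| `^ (3 / 2)) + \sum_(1 <= i < n) xi i / (`|ar i| `^ (3 / 2)).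
    rewrite /K -(big_mkord xpredT (fun i => xi_pp xi i / (`|ar i| `^ (3 / 2)))).
    rewrite big_ltn ?(leq_trans _ n2) // /xi_pp eqxx; congr (_ + _).
    by apply: eq_big_nat => i /andP[i1 _]; case: eqP i1 => // ->.
  apply: (@gd R n ar (xi_pp xi) (1 - K)) => //.
    by rewrite subr_gt0 KE.
  move=> s s0; rewrite /muf lerD2l lerN2.
  apply: ler_sum => i _; apply: term_le => //; last exact: an.
  exact/ltW/cpos.
- move=> hi h0 hx.
  have an := arneg 0 hi h0 (lexx _).
  apply: (@gd R n ar (xi_pm xi) 1) => //.
  move=> s s0; rewrite /muf; set S := \sum_(i < n) _; suff : 0 <= - S by lra.
  rewrite /S.
  rewrite -sumrN sumr_ge0 // => i _.
  rewrite /xi_pm mulNr opprK divr_ge0 ?ltW ?cpos //.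
  have hp := pos_D an s0 (ltn_ord i).
  by rewrite mulr_gt0 // sqrtr_gt0.
Qed.
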